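(* Let $ABC$ be a triangle with incenter $I$ and circumcenter $O$, and let $P$ be a point on line $IO$. Let $A', B', C'$ be the feet of the perpendiculars from $P$ to $AI, BI, CI$ respectively. Then the Steiner line of $P$ with respect to triangle $A'B'C'$ is the Euler line of triangle $A'B'C'$.
   Context: The points $A', B', C'$ and $P$ lie on the circle with diameter $PI$, i.e. $P$ lies on the circumcircle of $A'B'C'$. For a point $X$ on the circumcircle of a triangle, the reflections of $X$ over the three sidelines are collinear; the line containing them is the Steiner line of $X$ with respect to the triangle. *)

(* Defs.v *)
From mathcomp Require Import all_boot all_order all_algebra.
Set Implicit Arguments. Unset Strict Implicit. Unset Printing Implicit Defensive.
Import Order.TTheory GRing.Theory Num.Theory.
Local Open Scope ring_scope.

Section PlaneGeometry.
Variable R : realFieldType.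
Definition point := (R * R)%type.

Definition padd (u v : point) : point := (u.1 + v.1, u.2 + v.2).
Definition psub (u v : point) : point := (u.1 - v.1, u.2 - v.2).
Definition pscale (k : R) (u : point) : point := (k * u.1, k * u.2).
Definition dot (u v : point) : R := u.1 * v.1 + u.2 * v.2.
Definition cross (u v : point) : R := u.1 * v.2 - u.2 * v.1.
Definition sqdist (X Y : point) : R := dot (psub X Y) (psub X Y).

Definition collinear (A B C : point) : Prop := cross (psub B A) (psub C A) = 0.

(* Z lies on the line through X and Y (meaningful when X <> Y) *)
Definition on_line (X Y Z : point) : Prop := cross (psub Y X) (psub Z X) = 0.

(* foot of the perpendicular from P to the line XY (X <> Y) *)
Definition foot (P X Y : point) : point :=
  padd X (pscale (dot (psub P X) (psub Y X) / dot (psub Y X) (psub Y X)) (psub Y X)).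

Definition reflection (P X Y : point) : point :=
  psub (pscale 2 (foot P X Y)) P.

Definition sqdist_line (Z X Y : point) : R :=
  (cross (psub Y X) (psub Z X)) ^+ 2 / dot (psub Y X) (psub Y X).

Definition is_circumcenter (O A B C : point) : Prop :=
  sqdist O A = sqdist O B /\ sqdist O B = sqdist O C.

Definition is_incenter (I A B C : point) : Prop :=
  (exists a b c : R, [/\ 0 < a, 0 < b, 0 < c, a + b + c = 1 &
      I = padd (pscale a A) (padd (pscale b B) (pscale c C))]) /\
  sqdist_line I A B = sqdist_line I B C /\ sqdist_line I B C = sqdist_line I C A.

Definition centroid (A B C : point) : point :=
  pscale (1 / 3%:R) (padd A (padd B C)).

End PlaneGeometry.

(* Main.v *)
Require Import Defs.
From mathcomp Require Import all_boot all_order all_algebra.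
From mathcomp Require Import ring lra complex.
Import Order.TTheory GRing.Theory Num.Theory.
Local Open Scope ring_scope.

Section Bridge.
Context {R : realFieldType}.
Local Notation C := (R[i]).
Local Notation rc := (real_complex R).

Definition cj (z : C) : C := let: Complex a b := z in Complex a (- b).
Definition toC (u : point R) : C := Complex u.1 u.2.
Fact rel_key : unit. Proof. exact: tt. Qed.
Definition rel (z : point R) (u : point R) : C := locked_with rel_key (toC u - toC z).
Lemma rel_def z u : rel z u = toC u - toC z. Proof. by rewrite /rel unlock. Qed.

Lemma mulE (a b c d : R) : (Complex a b : C) * Complex c d = Complex (a*c - b*d) (a*d+b*c).
Proof. by []. Qed.
Lemma addE (a b c d : R) : (Complex a b : C) + Complex c d = Complex (a+c) (b+d).
Proof. by []. Qed.
Lemma oppE (a b : R) : - (Complex a b : C) = Complex (-a) (-b).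
Proof. by []. Qed.
Lemma invE (a b : R) : (Complex a b : C)^-1 = Complex (a/(a^+2+b^+2)) (-(b/(a^+2+b^+2))).
Proof. by []. Qed.
Lemma rcE (a : R) : rc a = Complex a 0. Proof. by []. Qed.

Lemma cjD x y : cj (x + y) = cj x + cj y.
Proof. case: x y => [a b] [c d]; rewrite addE /cj addE; congr Complex; ring. Qed.
Lemma cjN x : cj (- x) = - cj x.
Proof. by case: x => [a b]; rewrite oppE /cj oppE. Qed.
Lemma cjB x y : cj (x - y) = cj x - cj y.
Proof. by rewrite cjD cjN. Qed.
Lemma cjM x y : cj (x * y) = cj x * cj y.
Proof. case: x y => [a b] [c d]; rewrite mulE /cj mulE; congr Complex; ring. Qed.
Lemma cjV x : cj (x^-1) = (cj x)^-1.
Proof. case: x => [a b]; rewrite invE /cj invE sqrrN; congr Complex; ring. Qed.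
Lemma cjK x : cj (cj x) = x.
Proof. by case: x => [a b]; rewrite /cj opprK. Qed.
Lemma cj_rc x : cj (rc x) = rc x.
Proof. by rewrite rcE /cj oppr0. Qed.
Lemma cj_nat n : cj n%:R = n%:R.
Proof. by rewrite -(rmorph_nat rc) cj_rc. Qed.
Lemma cj_div x y : cj (x / y) = cj x / cj y.
Proof. by rewrite cjM cjV. Qed.
Lemma cj0 : cj 0 = 0.
Proof. by rewrite -(rmorph0 rc) cj_rc. Qed.
Lemma cj_eq0 x : (cj x == 0) = (x == 0).
Proof.
apply/eqP/eqP => [h|->]; last exact: cj0.
by rewrite -[x]cjK h cj0.
Qed.
Lemma cj_neq0 {x} : x != 0 -> cj x != 0.
Proof. by rewrite cj_eq0. Qed.

Lemma natC_neq0 n : (n.+1%:R : C) != 0.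
Proof. by rewrite -(rmorph_nat rc) fmorph_eq0 pnatr_eq0. Qed.
Lemma twoC : (2 : C) != 0. Proof. exact: (natC_neq0 1). Qed.
Lemma threeC : (3 : C) != 0. Proof. exact: (natC_neq0 2). Qed.

Lemma toC_add u v : toC (padd u v) = toC u + toC v.
Proof. by case: u v => [a b] [c d]. Qed.
Lemma toC_sub u v : toC (psub u v) = toC u - toC v.
Proof. by case: u v => [a b] [c d]. Qed.
Lemma toC_scale k u : toC (pscale k u) = rc k * toC u.
Proof. case: u => [a b]; rewrite /toC /= rcE mulE; congr Complex; ring. Qed.
Lemma rc_dot u v : rc (dot u v) * 2 = toC u * cj (toC v) + cj (toC u) * toC v.
Proof.
case: u v => [a b] [c d]; rewrite /toC /cj /dot /= rcE.
rewrite -[2 : C]/(Complex (1+1) (0+0)) !mulE addE; congr Complex; ring.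
Qed.
Lemma rc_dot_self u : rc (dot u u) = toC u * cj (toC u).
Proof.
case: u => [a b]; rewrite /toC /cj /dot /= rcE mulE; congr Complex; ring.
Qed.
Lemma rc_sqdist U V : rc (sqdist U V) = (toC U - toC V) * cj (toC U - toC V).
Proof. by rewrite /sqdist rc_dot_self toC_sub. Qed.

Lemma eq_lc (T : comRingType) (x y u v k : T) : x - y = k * (u - v) -> u = v -> x = y.
Proof. by move=> E H; apply/eqP; rewrite -subr_eq0 E H subrr mulr0. Qed.
Lemma eq_lc2 (T : comRingType) (x y u v u' v' k k' : T) :
  x - y = k * (u - v) + k' * (u' - v') -> u = v -> u' = v' -> x = y.
Proof. by move=> E H H'; apply/eqP; rewrite -subr_eq0 E H H' !subrr !mulr0 addr0. Qed.

Lemma cross_eq0 u v :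
  cross u v = 0 <-> cj (toC u) * toC v = toC u * cj (toC v).
Proof.
case: u v => [a b] [c d]; rewrite /toC /cj /cross /= !mulE.
split => [h|[_ h]].
  congr Complex; first ring.
  by apply: (@eq_lc _ _ _ _ _ 2 _ h); ring.
have : 2 * (a * d - b * c) = 0.
  rewrite -(subrr (a * d + - b * c)) {2}h; ring.
by move/eqP; rewrite mulf_eq0 pnatr_eq0 /= => /eqP.
Qed.

Lemma toC_inj u v : toC u = toC v -> u = v.
Proof. by case: u v => [a b] [c d] /= [-> ->]. Qed.

Lemma rcV x : rc (x^-1) = (rc x)^-1. Proof. exact: fmorphV. Qed.
Lemma rc_eq0 x : (rc x == 0) = (x == 0). Proof. exact: fmorph_eq0. Qed.


Lemma rc_div x y : rc (x / y) = rc x / rc y.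
Proof. exact: fmorph_div. Qed.
Lemma rc_nat n : rc n%:R = n%:R.
Proof. exact: rmorph_nat. Qed.

Lemma subC_neq0 {X Y : point R} : X <> Y -> toC Y - toC X != 0.
Proof. by move=> h; rewrite subr_eq0; apply/eqP => /toC_inj /esym. Qed.

Lemma dot_neq0 {X Y : point R} : X <> Y -> dot (psub Y X) (psub Y X) != 0.
Proof.
move=> h; rewrite -rc_eq0 rc_dot_self toC_sub mulf_neq0 ?cj_neq0 //;
exact: subC_neq0.
Qed.

Lemma toC_foot (P X Y : point R) : X <> Y ->
  toC (foot P X Y) = toC X + ((toC P - toC X) + cj (toC P - toC X) *
     ((toC Y - toC X) / cj (toC Y - toC X))) / 2.
Proof.
move=> h; have d0 := subC_neq0 h; have cd0 := cj_neq0 d0.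
rewrite /foot toC_add toC_scale !toC_sub rc_div.
have E : rc (dot (psub P X) (psub Y X)) =
   ((toC P - toC X) * cj (toC Y - toC X) + cj (toC P - toC X) * (toC Y - toC X)) / 2.
  by rewrite -!toC_sub -rc_dot; field; exact: twoC.
rewrite E rc_dot_self toC_sub.
field; rewrite d0 cd0 twoC //.
Qed.

Lemma toC_refl (P X Y : point R) : X <> Y ->
  toC (reflection P X Y) = toC X + cj (toC P - toC X) *
     ((toC Y - toC X) / cj (toC Y - toC X)).
Proof.
move=> h; rewrite /reflection toC_sub toC_scale toC_foot // rc_nat.
field; by rewrite twoC cj_neq0 // subC_neq0.
Qed.

Lemma RL1 (I X Y : point R) : X <> Y -> sqdist (foot I X Y) I = sqdist_line I X Y.
Proof.
move=> h; have := dot_neq0 h.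
case: I X Y {h} => [i1 i2] [x1 x2] [y1 y2].
rewrite /sqdist /sqdist_line /foot /dot /cross /psub /padd /pscale /= => h.
by field.
Qed.

Lemma RL2 (I X Y : point R) : X <> Y ->
  dot (psub X I) (psub (foot I X Y) I) = sqdist (foot I X Y) I.
Proof.
move=> h; have := dot_neq0 h.
case: I X Y {h} => [i1 i2] [x1 x2] [y1 y2].
rewrite /sqdist /foot /dot /psub /padd /pscale /= => h.
by field.
Qed.

Lemma RL3 (I X Y : point R) : X <> Y ->
  dot (psub Y I) (psub (foot I X Y) I) = sqdist (foot I X Y) I.
Proof.
move=> h; have := dot_neq0 h.
case: I X Y {h} => [i1 i2] [x1 x2] [y1 y2].
rewrite /sqdist /foot /dot /psub /padd /pscale /= => h.
by field.
Qed.


Lemma rel_self z : rel z z = 0. Proof. by rewrite rel_def subrr. Qed.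
Lemma relE z (U V : point R) : toC U - toC V = rel z U - rel z V.
Proof. rewrite !rel_def; ring. Qed.
Lemma rel_inj z (U V : point R) : rel z U = rel z V -> U = V.
Proof. by rewrite !rel_def => /addIr /toC_inj. Qed.
Lemma rel_sqdist z (U V : point R) :
  rc (sqdist U V) = (rel z U - rel z V) * cj (rel z U - rel z V).
Proof. by rewrite rc_sqdist (relE z). Qed.
Lemma rel_cross z (U V W : point R) :
  cross (psub U V) (psub W V) = 0 <->
  cj (rel z U - rel z V) * (rel z W - rel z V) = (rel z U - rel z V) * cj (rel z W - rel z V).
Proof. by rewrite cross_eq0 !toC_sub !(relE z). Qed.
Lemma rel_dot z (U V W : point R) :
  rc (dot (psub U W) (psub V W)) * 2 =
  (rel z U - rel z W) * cj (rel z V - rel z W) + cj (rel z U - rel z W) * (rel z V - rel z W).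
Proof. by rewrite rc_dot !toC_sub !(relE z). Qed.
Lemma rel_foot z (P X Y : point R) : X <> Y ->
  rel z (foot P X Y) = rel z X + ((rel z P - rel z X) + cj (rel z P - rel z X) *
     ((rel z Y - rel z X) / cj (rel z Y - rel z X))) / 2.
Proof. by move=> h; rewrite {1}rel_def toC_foot // !(relE z) !rel_def; ring. Qed.
Lemma rel_refl z (P X Y : point R) : X <> Y ->
  rel z (reflection P X Y) = rel z X + cj (rel z P - rel z X) *
     ((rel z Y - rel z X) / cj (rel z Y - rel z X)).
Proof. by move=> h; rewrite {1}rel_def toC_refl // !(relE z) !rel_def; ring. Qed.
Lemma rel_centroid z (X Y Z : point R) :
  rel z (centroid X Y Z) = (rel z X + rel z Y + rel z Z) / 3.
Proof.
rewrite /centroid !rel_def toC_scale !toC_add rc_div rc_nat (rmorph1 rc).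
field; exact: threeC.
Qed.

Lemma incenter_facts {I A B C : point R} : is_incenter I A B C -> ~ collinear A B C ->
  [/\ cross (psub A I) (psub B I) != 0, cross (psub B I) (psub C I) != 0
    & cross (psub C I) (psub A I) != 0].
Proof.
case=> [[x [y [z [hx hy hz hs ->]]]] _] hn.
have hn' : cross (psub B A) (psub C A) != 0 by apply/eqP.
have ex : x = 1 - y - z by rewrite -hs; ring.
subst x.
have e1 : cross (psub A (padd (pscale (1 - y - z) A) (padd (pscale y B) (pscale z C))))
   (psub B (padd (pscale (1 - y - z) A) (padd (pscale y B) (pscale z C)))) =
   z * cross (psub B A) (psub C A).
  by clear; case: A B C => [a1 a2] [b1 b2] [c1 c2]; rewrite /cross /psub /padd /pscale /=; ring.
have e2 : cross (psub B (padd (pscale (1 - y - z) A) (padd (pscale y B) (pscale z C))))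
   (psub C (padd (pscale (1 - y - z) A) (padd (pscale y B) (pscale z C)))) =
   (1 - y - z) * cross (psub B A) (psub C A).
  by clear; case: A B C => [a1 a2] [b1 b2] [c1 c2]; rewrite /cross /psub /padd /pscale /=; ring.
have e3 : cross (psub C (padd (pscale (1 - y - z) A) (padd (pscale y B) (pscale z C))))
   (psub A (padd (pscale (1 - y - z) A) (padd (pscale y B) (pscale z C)))) =
   y * cross (psub B A) (psub C A).
  by clear; case: A B C => [a1 a2] [b1 b2] [c1 c2]; rewrite /cross /psub /padd /pscale /=; ring.
by rewrite e1 e2 e3 !mulf_neq0 // gt_eqF.
Qed.

Lemma noncol_neq {A B C : point R} : ~ collinear A B C -> [/\ A <> B, B <> C & C <> A].
Proof.
move=> h; split => e; apply: h; rewrite /collinear; subst;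
  rewrite /cross /psub /=; ring.
Qed.

Lemma cross_neq {A B I : point R} : cross (psub A I) (psub B I) != 0 -> A <> I /\ A <> B.
Proof.
move=> h; split => e; subst; move: h;
  rewrite /cross /psub /= => /eqP; apply; ring.
Qed.

Lemma sl_neq0 {I X Y : point R} : cross (psub X I) (psub Y I) != 0 -> sqdist_line I X Y != 0.
Proof.
move=> h; have [_ hxy] := cross_neq h.
have := dot_neq0 hxy; move: h.
case: I X Y {hxy} => [i1 i2] [x1 x2] [y1 y2].
rewrite /sqdist_line /cross /dot /psub /= => h1 h2.
rewrite mulf_neq0 ?invr_neq0 // expf_neq0 //.
have -> : (y1 - x1) * (i2 - x2) - (y2 - x2) * (i1 - x1) =
  (x1 - i1) * (y2 - i2) - (x2 - i2) * (y1 - i1) by ring.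
exact: h1.
Qed.

Lemma tangent (I : point R) {X Y : point R} : X <> Y ->
  let d := rel I (foot I X Y) in let s := rc (sqdist_line I X Y) in
  [/\ d * cj d = s, rel I X * cj d + cj (rel I X) * d = 2 * s
    & rel I Y * cj d + cj (rel I Y) * d = 2 * s].
Proof.
move=> h d s.
have e1 : d * cj d = s.
  by rewrite /s -RL1 // (rel_sqdist I) rel_self subr0.
split => //.
  have := rel_dot I X (foot I X Y) I; rewrite RL2 // (rel_sqdist I) rel_self !subr0 -/d e1.
  by move=> <-; rewrite mulrC.
have := rel_dot I Y (foot I X Y) I; rewrite RL3 // (rel_sqdist I) rel_self !subr0 -/d e1.
by move=> <-; rewrite mulrC.
Qed.


Lemma neq_ring {x y x' y' : C} : x != y -> x' - y' = x - y -> x' != y'.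
Proof. by move=> h e; apply: contra h => /eqP h; rewrite -subr_eq0 -e h subrr. Qed.

Lemma tsep {x y z u v s : C} : s != 0 ->
  x * cj u + cj x * u = 2 * s -> x * cj v + cj x * v = 2 * s ->
  y * cj v + cj y * v = 2 * s -> z * cj u + cj z * u = 2 * s ->
  cj (y - x) * (z - x) != (y - x) * cj (z - x) -> u + v != 0 /\ u - v != 0.
Proof.
move=> s0 Ex1 Ex2 Ey Ez hn; split.
  apply/eqP => h; have hv : v = - u by apply/eqP; rewrite -addr_eq0 addrC h.
  move: Ex2; rewrite hv cjN => Ex2.
  have : 4 * s = 0 by apply: (@eq_lc2 _ _ _ _ _ _ _ (-1) (-1) _ Ex1 Ex2); ring.
  by move/eqP; rewrite mulf_eq0 (negPf s0) orbF (negPf (natC_neq0 3)).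
apply/eqP => h; have hv : v = u by apply/eqP; rewrite eq_sym -subr_eq0 h.
subst v.
have u0 : u != 0.
  apply/eqP => u0; move: Ex1; rewrite u0 cj0 !mulr0 add0r => /esym/eqP.
  by rewrite mulf_eq0 (negPf s0) (negPf twoC).
have cy : cj y = (2 * s - y * cj u) / u by rewrite -Ey; field.
have cx : cj x = (2 * s - x * cj u) / u by rewrite -Ex1; field.
have cz : cj z = (2 * s - z * cj u) / u by rewrite -Ez; field.
by move: hn; rewrite !cjB cy cx cz => /eqP; apply; field.
Qed.

Lemma lin_sol {u v s a ca : C} : s != 0 -> u != 0 -> v != 0 -> u + v != 0 -> u - v != 0 ->
  a * (s / u) + ca * u = 2 * s -> a * (s / v) + ca * v = 2 * s ->
  a = 2 * u * v / (u + v) /\ ca = 2 * s / (u + v).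
Proof.
move=> s0 u0 v0 uv1 uv2 E1 E2.
have vu1 : v + u != 0 by rewrite addrC.
have vu2 : v - u != 0 by rewrite -opprB oppr_eq0.
split.
  apply: (@eq_lc2 _ _ _ _ _ _ _ (v * u * v / (s * ((v - u) * (v + u))))
     (- u * u * v / (s * ((v - u) * (v + u)))) _ E1 E2).
  by field; rewrite v0 vu1 vu2 s0 u0.
apply: (@eq_lc2 _ _ _ _ _ _ _ (u / ((u - v) * (u + v)))
     (- v / ((u - v) * (u + v))) _ E1 E2).
by field; rewrite ?v0 ?vu1 ?vu2 ?s0 ?u0 ?uv1 ?uv2.
Qed.


Lemma circ_uniq {a b c ca cb cc o co o' co' : C} :
  (o-a)*(co-ca) = (o-b)*(co-cb) -> (o-b)*(co-cb) = (o-c)*(co-cc) ->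
  (o'-a)*(co'-ca) = (o'-b)*(co'-cb) -> (o'-b)*(co'-cb) = (o'-c)*(co'-cc) ->
  (cb-ca)*(c-b) - (cc-cb)*(b-a) != 0 -> o = o' /\ co = co'.
Proof.
move=> E1 E2 E1' E2' hd.
have L1 : (o - o') * (cb - ca) + (co - co') * (b - a) = 0.
  by apply: (@eq_lc2 _ _ _ _ _ _ _ 1 (-1) _ E1 E1'); ring.
have L2 : (o - o') * (cc - cb) + (co - co') * (c - b) = 0.
  by apply: (@eq_lc2 _ _ _ _ _ _ _ 1 (-1) _ E2 E2'); ring.
have hx : (o - o') * ((cb-ca)*(c-b) - (cc-cb)*(b-a)) = 0.
  by apply: (@eq_lc2 _ _ _ _ _ _ _ (c - b) (-(b - a)) _ L1 L2); ring.
have hy : (co - co') * ((cb-ca)*(c-b) - (cc-cb)*(b-a)) = 0.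
  by apply: (@eq_lc2 _ _ _ _ _ _ _ (- (cc - cb)) (cb - ca) _ L1 L2); ring.
move/eqP: hx; move/eqP: hy; rewrite !mulf_eq0 (negPf hd) !orbF !subr_eq0.
by move=> /eqP -> /eqP ->.
Qed.

Lemma cj_inv_d {d s : C} : s != 0 -> d * cj d = s -> d != 0 /\ cj d = s / d.
Proof.
move=> s0 e; have d0 : d != 0.
  by apply: contra s0 => /eqP d0; rewrite -e d0 mul0r.
by split => //; rewrite -e; field.
Qed.

Lemma core_inc {a b c da db dc s o : C} :
  s != 0 -> da * cj da = s -> db * cj db = s -> dc * cj dc = s ->
  a * cj db + cj a * db = 2 * s -> a * cj dc + cj a * dc = 2 * s ->
  b * cj dc + cj b * dc = 2 * s -> b * cj da + cj b * da = 2 * s ->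
  c * cj da + cj c * da = 2 * s -> c * cj db + cj c * db = 2 * s ->
  cj (b - a) * (c - a) != (b - a) * cj (c - a) ->
  (o - a) * cj (o - a) = (o - b) * cj (o - b) -> (o - b) * cj (o - b) = (o - c) * cj (o - c) ->
  [/\ a != 0, b != 0, c != 0,
   4 * s * o * ((a / cj a) * (b / cj b) * (c / cj c)) =
     a * b * c * ((a / cj a) * (b / cj b) + (b / cj b) * (c / cj c) + (c / cj c) * (a / cj a)) &
   4 * s * cj o * ((a / cj a) * (b / cj b) * (c / cj c)) =
     a * b * c * ((a / cj a) + (b / cj b) + (c / cj c))].
Proof.
move=> s0 Ha Hb Hc Hab Hac Hbc Hba Hca Hcb hn Ho1 Ho2.
have [ab1 ab2] := tsep s0 Hab Hac Hbc Hcb hn.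
have hn2 : cj (c - b) * (a - b) != (c - b) * cj (a - b).
  by apply: (neq_ring hn); rewrite !cjB; ring.
have hn3 : cj (a - c) * (b - c) != (a - c) * cj (b - c).
  by apply: (neq_ring hn); rewrite !cjB; ring.
have [bc1 bc2] := tsep s0 Hbc Hba Hca Hac hn2.
have [ca1 ca2] := tsep s0 Hca Hcb Hab Hba hn3.
have [da0 cda] := cj_inv_d s0 Ha.
have [db0 cdb] := cj_inv_d s0 Hb.
have [dc0 cdc] := cj_inv_d s0 Hc.
rewrite cda cdb cdc in Hab Hac Hbc Hba Hca Hcb.
have [ea eca] := lin_sol s0 db0 dc0 ab1 ab2 Hab Hac.
have [eb ecb] := lin_sol s0 dc0 da0 bc1 bc2 Hbc Hba.
have [ec ecc] := lin_sol s0 da0 db0 ca1 ca2 Hca Hcb.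
have hdet : (cj b - cj a) * (c - b) - (cj c - cj b) * (b - a) != 0.
  by rewrite -subr_eq0 in hn; apply: (neq_ring hn); rewrite !cjB; ring.
rewrite !cjB in Ho1 Ho2.
have two0 := twoC.
have four0 : (4 : C) != 0 := natC_neq0 3.
have a0 : a != 0 by rewrite ea !mulf_neq0 ?invr_neq0.
have b0 : b != 0 by rewrite eb !mulf_neq0 ?invr_neq0.
have c0 : c != 0 by rewrite ec !mulf_neq0 ?invr_neq0.
pose os := a*b*c*((a / cj a) * (b / cj b) + (b / cj b) * (c / cj c) + (c / cj c) * (a / cj a))
   / (4 * s * ((a / cj a) * (b / cj b) * (c / cj c))).
pose cs := a*b*c*((a / cj a) + (b / cj b) + (c / cj c))
   / (4 * s * ((a / cj a) * (b / cj b) * (c / cj c))).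
have Hs1 : (os - a) * (cs - cj a) = (os - b) * (cs - cj b).
  rewrite /os /cs eca ecb ecc ea eb ec.
  by field; rewrite ?bc1 ?ca1 ?s0 ?two0 ?ab1 ?da0 ?db0 ?dc0 ?four0.
have Hs2 : (os - b) * (cs - cj b) = (os - c) * (cs - cj c).
  rewrite /os /cs eca ecb ecc ea eb ec.
  by field; rewrite ?bc1 ?ca1 ?s0 ?two0 ?ab1 ?da0 ?db0 ?dc0 ?four0.
have [-> ->] := circ_uniq Ho1 Ho2 Hs1 Hs2 hdet.
split => //; rewrite /os /cs eca ecb ecc ea eb ec;
  by field; rewrite ?bc1 ?ca1 ?s0 ?two0 ?ab1 ?da0 ?db0 ?dc0 ?four0.
Qed.


Lemma e_neq {a b : C} : a != 0 -> b != 0 -> cj a * b != a * cj b -> a / cj a != b / cj b.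
Proof.
move=> a0 b0 h; have ca0 := cj_neq0 a0; have cb0 := cj_neq0 b0.
apply: contra h => /eqP h; rewrite -subr_eq0.
have -> : cj a * b - a * cj b = cj a * cj b * (b / cj b - a / cj a) by field; rewrite ?ca0 ?cb0.
by rewrite h subrr mulr0.
Qed.

Lemma cj_e (a : C) : cj (a / cj a) = (a / cj a)^-1.
Proof. by rewrite cj_div cjK invf_div. Qed.

End Bridge.


Ltac nz := repeat (apply/andP; split); rewrite ?oppr_eq0; try assumption.

Theorem proposition3p1 (R : realFieldType) (A B C I O P O' : point R) :
  ~ collinear A B C ->
  is_incenter I A B C ->
  is_circumcenter O A B C ->
  I <> O ->
  on_line I O P ->
  P <> I ->
  let A' := foot P A I in
  let B' := foot P B I in
  let C' := foot P C I in
  is_circumcenter O' A' B' C' ->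
  let G := centroid A' B' C' in
  let Ra := reflection P B' C' in
  let Rb := reflection P C' A' in
  let Rc := reflection P A' B' in
  [/\ O' <> G, on_line O' G Ra, on_line O' G Rb, on_line O' G Rc
    & ~ (Ra = Rb /\ Rb = Rc)].
Proof.
move=> hnc hinc hcirc hIO hP hPI A' B' C' hcirc' G Ra Rb Rc.
have [hAB hBC hCA] := noncol_neq hnc.
have [x1 x2 x3] := incenter_facts hinc hnc.
have [hAI _] := cross_neq x1.
have [hBI _] := cross_neq x2.
have [hCI _] := cross_neq x3.
have [Tc1 Tc2 Tc3] := tangent I hAB.
have [Ta1 Ta2 Ta3] := tangent I hBC.
have [Tb1 Tb2 Tb3] := tangent I hCA.
have s0 : real_complex R (sqdist_line I A B) != 0 by rewrite rc_eq0; exact: sl_neq0.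
case: hinc => _ [e1 e2].
rewrite -e2 -e1 in Tb1 Tb2 Tb3.
rewrite -e1 in Ta1 Ta2 Ta3.
have hn : cj (rel I B - rel I A) * (rel I C - rel I A) != (rel I B - rel I A) * cj (rel I C - rel I A).
  by apply/eqP => h; apply: hnc; apply/(rel_cross I).
have [ho1 ho2] : (rel I O - rel I A) * cj (rel I O - rel I A) = (rel I O - rel I B) * cj (rel I O - rel I B)
   /\ (rel I O - rel I B) * cj (rel I O - rel I B) = (rel I O - rel I C) * cj (rel I O - rel I C).
  by case: hcirc => h1 h2; rewrite -!(rel_sqdist I) h1 h2.
have [a0 b0 c0 K1 K2] := core_inc s0 Ta1 Tb1 Tc1 Tb3 Tc2 Tc3 Ta2 Ta3 Tb2 hn ho1 ho2.
have hx1 : cj (rel I A) * rel I B != rel I A * cj (rel I B).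
  by apply/eqP => h; move/eqP: x1; apply; apply/(rel_cross I); rewrite rel_self !subr0.
have hx2 : cj (rel I B) * rel I C != rel I B * cj (rel I C).
  by apply/eqP => h; move/eqP: x2; apply; apply/(rel_cross I); rewrite rel_self !subr0.
have hx3 : cj (rel I C) * rel I A != rel I C * cj (rel I A).
  by apply/eqP => h; move/eqP: x3; apply; apply/(rel_cross I); rewrite rel_self !subr0.
have hab := e_neq a0 b0 hx1.
have hbc := e_neq b0 c0 hx2.
have hca := e_neq c0 a0 hx3.
have hp0 : rel I P != 0.
  by apply/eqP => h; apply: hPI; apply: (rel_inj I); rewrite h rel_self.
have ho0 : rel I O != 0.
  by apply/eqP => h; apply: hIO; apply: (rel_inj I); rewrite h rel_self.
have hOP : cj (rel I O) * rel I P = rel I O * cj (rel I P).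
  by move: hP; rewrite /on_line => /(rel_cross I); rewrite rel_self !subr0.
have ca0 := cj_neq0 a0; have cb0 := cj_neq0 b0; have cc0 := cj_neq0 c0.
have cp0 := cj_neq0 hp0; have co0 := cj_neq0 ho0.
have two0 := @twoC R; have three0 := @threeC R; have four0 : (4 : R[i]) != 0 := natC_neq0 3.
pose ea := rel I A / cj (rel I A).
pose eb := rel I B / cj (rel I B).
pose ec := rel I C / cj (rel I C).
rewrite -/ea -/eb -/ec in K1 K2 hab hbc hca.
have ea0 : ea != 0 by rewrite mulf_neq0 ?invr_neq0.
have eb0 : eb != 0 by rewrite mulf_neq0 ?invr_neq0.
have ec0 : ec != 0 by rewrite mulf_neq0 ?invr_neq0.
have hcea : cj ea = ea^-1 := cj_e _.
have hceb : cj eb = eb^-1 := cj_e _.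
have hcec : cj ec = ec^-1 := cj_e _.
have hA' : rel I A' = (rel I P + cj (rel I P) * ea) / 2.
  rewrite /A' (rel_foot I) // rel_self (cjB (rel I P)) (cjB 0) cj0 /ea; field.
  by rewrite ?oppr_eq0 ?ca0 ?two0.
have hB' : rel I B' = (rel I P + cj (rel I P) * eb) / 2.
  rewrite /B' (rel_foot I) // rel_self (cjB (rel I P)) (cjB 0) cj0 /eb; field.
  by rewrite ?oppr_eq0 ?cb0 ?two0.
have hC' : rel I C' = (rel I P + cj (rel I P) * ec) / 2.
  rewrite /C' (rel_foot I) // rel_self (cjB (rel I P)) (cjB 0) cj0 /ec; field.
  by rewrite ?oppr_eq0 ?cc0 ?two0.
clearbody ea eb ec.
have hs2 : ea * eb + eb * ec + ec * ea != 0.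
  apply/eqP => h; move: K1; rewrite h mulr0 => /eqP.
  by rewrite !mulf_eq0 (negPf four0) (negPf s0) (negPf ho0) (negPf ea0) (negPf eb0) (negPf ec0).
have hs1 : ea + eb + ec != 0.
  apply/eqP => h; move: K2; rewrite h mulr0 => /eqP.
  by rewrite !mulf_eq0 (negPf four0) (negPf s0) (negPf co0) (negPf ea0) (negPf eb0) (negPf ec0).
have hoE : rel I O = rel I A * rel I B * rel I C * (ea * eb + eb * ec + ec * ea)
    / (4 * real_complex R (sqdist_line I A B) * (ea * eb * ec)).
  by rewrite -K1; field; rewrite ?four0 ?s0 ?ea0 ?eb0 ?ec0.
have hcoE : cj (rel I O) = rel I A * rel I B * rel I C * (ea + eb + ec)
    / (4 * real_complex R (sqdist_line I A B) * (ea * eb * ec)).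
  by rewrite -K2; field; rewrite ?four0 ?s0 ?ea0 ?eb0 ?ec0.
have hcp : cj (rel I P) = rel I P * (ea + eb + ec) / (ea * eb + eb * ec + ec * ea).
  have -> : cj (rel I P) = cj (rel I O) * rel I P / rel I O.
    by rewrite hOP; field.
  rewrite hcoE hoE; field.
  by rewrite ?four0 ?s0 ?ea0 ?eb0 ?ec0 ?hs2 ?a0 ?b0 ?c0.
have hcA' : cj (rel I A') = (cj (rel I P) + rel I P / ea) / 2.
  by rewrite hA' cj_div cjD cjM cjK hcea cj_nat.
have hcB' : cj (rel I B') = (cj (rel I P) + rel I P / eb) / 2.
  by rewrite hB' cj_div cjD cjM cjK hceb cj_nat.
have hcC' : cj (rel I C') = (cj (rel I P) + rel I P / ec) / 2.
  by rewrite hC' cj_div cjD cjM cjK hcec cj_nat.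
have neqP : forall (X Y : point R) (ex ey : R[i]), ex != ey ->
    rel I X = (rel I P + cj (rel I P) * ex) / 2 ->
    rel I Y = (rel I P + cj (rel I P) * ey) / 2 -> X <> Y.
  move=> X Y ex ey hne hX hY e; move: hX; rewrite e hY => h.
  have : cj (rel I P) * (ex - ey) = 0.
    by apply/esym; apply: (@eq_lc _ _ _ _ _ 2 _ h); field.
  by move/eqP; rewrite mulf_eq0 (negPf cp0) subr_eq0 (negPf hne).
have hA'B' := neqP _ _ _ _ hab hA' hB'.
have hB'C' := neqP _ _ _ _ hbc hB' hC'.
have hC'A' := neqP _ _ _ _ hca hC' hA'.
have [ho' hco'] : rel I O' = rel I P / 2 /\ cj (rel I O') = cj (rel I P) / 2.
  case: hcirc' => h1 h2.
  have h1' : (rel I O' - rel I A') * (cj (rel I O') - cj (rel I A')) =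
     (rel I O' - rel I B') * (cj (rel I O') - cj (rel I B')).
    by rewrite -!cjB -!(rel_sqdist I) h1.
  have h2' : (rel I O' - rel I B') * (cj (rel I O') - cj (rel I B')) =
     (rel I O' - rel I C') * (cj (rel I O') - cj (rel I C')).
    by rewrite -!cjB -!(rel_sqdist I) h2.
  apply: (circ_uniq h1' h2').
  - by rewrite hcA' hcB' hA' hB'; field; nz.
  - by rewrite hcC' hcB' hC' hB'; field; nz.
  have -> : (cj (rel I B') - cj (rel I A')) * (rel I C' - rel I B') -
     (cj (rel I C') - cj (rel I B')) * (rel I B' - rel I A') =
     rel I P * cj (rel I P) * (ea - eb) * (ec - eb) * (ec - ea) / (4 * ea * eb * ec).
    by rewrite hcA' hcB' hcC' hA' hB' hC'; field; nz.
  have hab' : ea - eb != 0 by rewrite subr_eq0.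
  have hcb' : ec - eb != 0 by rewrite subr_eq0 eq_sym.
  have hca' : ec - ea != 0 by rewrite subr_eq0.
  by rewrite !mulf_neq0 // invr_neq0 // !mulf_neq0.
have reflP : forall (X Y : point R) (ex ey : R[i]), ex != ey -> ex != 0 -> ey != 0 ->
    rel I X = (rel I P + cj (rel I P) * ex) / 2 -> rel I Y = (rel I P + cj (rel I P) * ey) / 2 ->
    cj (rel I X) = (cj (rel I P) + rel I P / ex) / 2 -> cj (rel I Y) = (cj (rel I P) + rel I P / ey) / 2 ->
    rel I (reflection P X Y) = (rel I P + cj (rel I P) * (ex + ey)
        - cj (rel I P) * cj (rel I P) * ex * ey / rel I P) / 2 /\
    cj (rel I (reflection P X Y)) = (cj (rel I P) + rel I P * (ex + ey) / (ex * ey)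
        - rel I P * rel I P / (ex * ey * cj (rel I P))) / 2.
  move=> X Y ex ey hne ex0 ey0 hX hY hcX hcY.
  have hXY := neqP _ _ _ _ hne hX hY.
  have hne' : ex - ey != 0 by rewrite subr_eq0.
  have hne'' : ey - ex != 0 by rewrite subr_eq0 eq_sym.
  rewrite (rel_refl I) //; split.
    rewrite !cjB hcX hcY hX hY; field; nz.
    by match goal with |- is_true (~~ (?E == 0)) => have -> : E = rel I P * (ex - ey) by ring end; rewrite mulf_neq0.
  rewrite cjD cjM cj_div !cjK !cjB hcX hcY hX hY; field; nz.
  by match goal with |- is_true (~~ (?E == 0)) => have -> : E = cj (rel I P) * (ey - ex) by ring end; rewrite mulf_neq0.
have [hRa hcRa] := reflP _ _ _ _ hbc eb0 ec0 hB' hC' hcB' hcC'.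
have [hRb hcRb] := reflP _ _ _ _ (negbT (negbTE (negbT (negbTE hca)))) ec0 ea0 hC' hA' hcC' hcA'.
have [hRc hcRc] := reflP _ _ _ _ hab ea0 eb0 hA' hB' hcA' hcB'.
rewrite -/Ra in hRa hcRa; rewrite -/Rb in hRb hcRb; rewrite -/Rc in hRc hcRc.
have hG : rel I G = (rel I A' + rel I B' + rel I C') / 3 by rewrite rel_centroid.
have hcG : cj (rel I G) = (cj (rel I A') + cj (rel I B') + cj (rel I C')) / 3.
  by rewrite hG cj_div cj_nat !cjD.
split.
- move=> e; have h : rel I O' = rel I G by rewrite e.
  rewrite ho' hG hA' hB' hC' in h.
  have : cj (rel I P) * (ea + eb + ec) = 0.
    by apply: (@eq_lc _ _ _ _ _ (-6) _ h); field; nz.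
  by move/eqP; rewrite mulf_eq0 (negPf cp0) (negPf hs1).
- rewrite /on_line; apply/(rel_cross I); rewrite !cjB.
  rewrite hcG hG hco' ho' hcRa hRa hcA' hcB' hcC' hA' hB' hC' hcp.
  field; nz.
- rewrite /on_line; apply/(rel_cross I); rewrite !cjB.
  rewrite hcG hG hco' ho' hcRb hRb hcA' hcB' hcC' hA' hB' hC' hcp.
  field; nz.
- rewrite /on_line; apply/(rel_cross I); rewrite !cjB.
  rewrite hcG hG hco' ho' hcRc hRc hcA' hcB' hcC' hA' hB' hC' hcp.
  field; nz.
case=> q1 q2.
have h1 : rel I Ra = rel I Rb by rewrite q1.
have h2 : rel I Rb = rel I Rc by rewrite q2.
rewrite hRa hRb in h1; rewrite hRb hRc in h2.
have k1 : cj (rel I P) * (eb - ea) * (rel I P - cj (rel I P) * ec) = 0.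
  by apply: (@eq_lc _ _ _ _ _ (2 * rel I P) _ h1); field; nz.
have k2 : cj (rel I P) * (ec - eb) * (rel I P - cj (rel I P) * ea) = 0.
  by apply: (@eq_lc _ _ _ _ _ (2 * rel I P) _ h2); field; nz.
move/eqP: k1; rewrite !mulf_eq0 (negPf cp0) subr_eq0 eq_sym (negPf hab) /= subr_eq0 => /eqP k1.
move/eqP: k2; rewrite !mulf_eq0 (negPf cp0) subr_eq0 eq_sym (negPf hbc) /= subr_eq0 => /eqP k2.
have k3 : cj (rel I P) * ec = cj (rel I P) * ea by rewrite -k1 -k2.
by move: hca; rewrite (mulfI cp0 k3) eqxx.
Qed.
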